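(* Let $(v^*,u^* )$ be the unique saddle point of $\min_v\max_u E(v,u)$ and let $L(v,u)=\frac{\alpha}{2}\sum_{s}|v_s-v^*_s|^2+\tau\sum_{s,a}\big(u^*_{sa}\log\frac{u^*_{sa}}{u_{sa}}+u_{sa}-u^*_{sa}\big)$. Consider the natural gradient ascent descent dynamics on $\mathbb{R}^{|S|}\times\mathbb{R}^{|S|\times|A|}_{>0}$: $$\frac{dv_{s'}}{dt}=-\Big(v_{s'}-\frac1\alpha\sum_{s,a}K_{ass'}u_{sa}\Big),\ s'\in S,\qquad \frac{du_{sa}}{dt}=-u_{sa}\Big(\log\frac{u_{sa}}{\tilde u_s}-\frac1\tau\Big(r_{sa}-\sum_{s'}K_{ass'}v_{s'}\Big)\Big),\ (s,a)\in S\times A.$$ Then $L$ is a Lyapunov function for this dynamics: $\frac{dL}{dt}\le 0$ along its trajectories, and the only trajectory of the dynamics along which $\frac{dL}{dt}=0$ is the constant trajectory $(v,u)=(v^*,u^* )$.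
   Context: Finite MDP: state space $S$, action space $A$, transition probabilities $P_{ass'}$ (with $\sum_{s'}P_{ass'}=1$), rewards $r_{sa}\ge0$, discount $\gamma\in(0,1)$, regularization $\tau>0$, and $\alpha>0$. $K_{ass'}=\delta_{ss'}-\gamma P_{ass'}$, $\tilde u_s=\sum_a u_{sa}$, and $E(v,u)=\frac{\alpha}{2}\sum_s v_s^2+\sum_{s,a}u_{sa}(r_{sa}-\sum_{s'}K_{ass'}v_{s'})-\tau\sum_{s,a}u_{sa}\log(u_{sa}/\tilde u_s)$. This min-max problem has a unique saddle point $(v^*,u^* )$ with $u^*_{sa}>0$. *)

(* Defs.v *)
From HB Require Import structures.
From mathcomp Require Import all_boot all_order all_algebra.
From mathcomp Require Import all_classical all_reals all_analysis.
Set Implicit Arguments. Unset Strict Implicit. Unset Printing Implicit Defensive.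
Import Order.TTheory GRing.Theory Num.Theory.
Import numFieldNormedType.Exports.
Local Open Scope ring_scope.

Section MDP.
Variables (R : realType) (S A : finType).
Variables (P : A -> S -> S -> R) (r : S -> A -> R) (gamma tau alpha : R).

Definition Kmat (a : A) (s s' : S) : R := (s == s')%:R - gamma * P a s s'.

Definition utilde (u : S -> A -> R) (s : S) : R := \sum_(a : A) u s a.

Definition Efun (v : S -> R) (u : S -> A -> R) : R :=
  alpha / 2 * \sum_(s : S) v s ^+ 2
  + \sum_(s : S) \sum_(a : A) u s a * (r s a - \sum_(s' : S) Kmat a s s' * v s')
  - tau * \sum_(s : S) \sum_(a : A) u s a * ln (u s a / utilde u s).

Definition posu (u : S -> A -> R) : Prop := forall s a, 0 < u s a.

Definition is_saddle (vs : S -> R) (us : S -> A -> R) : Prop :=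
  posu us /\
  (forall u, posu u -> Efun vs u <= Efun vs us) /\
  (forall v, Efun vs us <= Efun v us).

Definition Lyap (vs : S -> R) (us : S -> A -> R) (v : S -> R) (u : S -> A -> R) : R :=
  alpha / 2 * \sum_(s : S) (v s - vs s) ^+ 2
  + tau * \sum_(s : S) \sum_(a : A)
      (us s a * ln (us s a / u s a) + u s a - us s a).

Definition ngad_at (V : R -> S -> R) (U : R -> S -> A -> R) (t : R) : Prop :=
  posu (U t) /\
  (forall s', derivable (fun x => V x s') t 1) /\
  (forall s a, derivable (fun x => U x s a) t 1) /\
  (forall s', derive1 (fun x => V x s') t =
     - (V t s' - alpha^-1 * \sum_(s : S) \sum_(a : A) Kmat a s s' * U t s a)) /\
  (forall s a, derive1 (fun x => U x s a) t =
     - (U t s a * (ln (U t s a / utilde (U t) s)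
                   - tau^-1 * (r s a - \sum_(s' : S) Kmat a s s' * V t s')))).

End MDP.

(* Main.v *)
Require Import Defs.
From HB Require Import structures.
From mathcomp Require Import all_boot all_order all_algebra.
From mathcomp Require Import all_classical all_reals all_analysis.
From mathcomp Require Import ring lra.
Import Order.TTheory GRing.Theory Num.Theory.
Import numFieldNormedType.Exports.
Local Open Scope ring_scope.
Set Implicit Arguments. Unset Strict Implicit.

Section Helpers.
Variable R : realType.
Implicit Types (f g : R -> R) (t df dg : R).

Lemma isd_add t f g df dg : is_derive t 1 f df -> is_derive t 1 g dg ->
  is_derive t 1 (fun x => f x + g x) (df + dg).
Proof. move=> hf hg; exact: (is_deriveD hf hg). Qed.

Lemma isd_scale t k f df : is_derive t 1 f df ->
  is_derive t 1 (fun x => k * f x) (k * df).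
Proof. move=> hf; exact: (is_deriveZ k hf). Qed.

Lemma isd_cst t (c : R) : is_derive t 1 (fun _ : R => c) 0.
Proof. exact: is_derive_cst. Qed.

Lemma isd_sub_cst t f df (c : R) : is_derive t 1 f df ->
  is_derive t 1 (fun x => f x - c) df.
Proof. move=> hf; have := isd_add hf (isd_cst t (- c)); by rewrite addr0. Qed.

Lemma isd_sumI (I : eqType) (l : seq I) t (F : I -> R -> R) (dF : I -> R) :
  (forall i, is_derive t 1 (F i) (dF i)) ->
  is_derive t 1 (fun x => \sum_(i <- l) F i x) (\sum_(i <- l) dF i).
Proof.
move=> h; elim: l => [|i l IH].
  under [fun x => _]funext => x do rewrite big_nil.
  by rewrite big_nil; exact: isd_cst.
under [fun x => _]funext => x do rewrite big_cons.
by rewrite big_cons; apply: isd_add.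
Qed.

Lemma isd_sq t f df : is_derive t 1 f df ->
  is_derive t 1 (fun x => f x ^+ 2) (2 * f t * df).
Proof.
move=> hf; have := is_deriveX 2 hf.
by rewrite /= expr1 => H; apply: H.
Qed.

Lemma isd_lnquot t (c : R) f df : 0 < c -> 0 < f t -> is_derive t 1 f df ->
  is_derive t 1 (fun x => ln (c / f x)) (- (df / f t)).
Proof.
move=> c0 ft0 hf.
have hv : is_derive t 1 (fun x => c * (f x)^-1) (c * (- (f t) ^- 2 *: df)).
  apply: isd_scale; apply: is_deriveV => //; exact: lt0r_neq0.
have hl : is_derive (c / f t) 1 (@ln R) (c / f t)^-1 by apply: is_derive1_ln; exact: divr_gt0.
have := @is_derive1_comp R (@ln R) (fun x => c / f x) t _ _ hl hv.
have -> : (c / f t)^-1 * (c * (- f t ^- 2 *: df)) = - (df / f t).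
  rewrite /= -[_ *: _]/(_ * _). field. by rewrite !lt0r_neq0.
by [].
Qed.
End Helpers.

Section Alg.
Variables (R : realType) (S A : finType).
Variables (P : A -> S -> S -> R) (r : S -> A -> R) (gamma tau alpha : R).
Local Notation K := (Kmat P gamma).
Local Notation E := (Efun P r gamma tau alpha).

Definition Lin (u : S -> A -> R) (v : S -> R) :=
  \sum_(s : S) \sum_(a : A) u s a * \sum_(s' : S) K a s s' * v s'.
Definition Rr (u : S -> A -> R) := \sum_(s : S) \sum_(a : A) u s a * r s a.
Definition Cross (u w : S -> A -> R) :=
  \sum_(s : S) \sum_(a : A) w s a * ln (u s a / utilde u s).
Definition Ent u := Cross u u.
Definition Cv (u : S -> A -> R) (s' : S) := \sum_(s : S) \sum_(a : A) K a s s' * u s a.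

Lemma sumQ (u : S -> A -> R) v :
  \sum_(s : S) \sum_(a : A) u s a * (r s a - \sum_(s' : S) K a s s' * v s') = Rr u - Lin u v.
Proof.
rewrite /Rr /Lin -sumrB; apply: eq_bigr => s _; rewrite -sumrB.
by apply: eq_bigr => a _; rewrite mulrBr.
Qed.

Lemma EfunE v u : E v u = alpha / 2 * \sum_(s : S) v s ^+ 2 + (Rr u - Lin u v) - tau * Ent u.
Proof. by rewrite /Efun sumQ. Qed.

Lemma LinE u v : \sum_(s' : S) v s' * Cv u s' = Lin u v.
Proof.
rewrite /Lin /Cv.
under eq_bigr => s' _ do rewrite mulr_sumr.
rewrite exchange_big /=; apply: eq_bigr => s _.
under eq_bigr => s' _ do rewrite mulr_sumr.
rewrite exchange_big /=; apply: eq_bigr => a _.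
rewrite mulr_sumr; apply: eq_bigr => s' _; ring.
Qed.

Lemma LinB u v w : Lin u (fun s => v s - w s) = Lin u v - Lin u w.
Proof.
rewrite /Lin -sumrB; apply: eq_bigr => s _; rewrite -sumrB.
apply: eq_bigr => a _; rewrite -mulrBr -sumrB; congr (_ * _).
by apply: eq_bigr => s' _; rewrite mulrBr.
Qed.

Lemma sum2_lin (f1 f2 f3 f4 : S -> A -> R) c :
  \sum_(s : S) \sum_(a : A) (f1 s a - f2 s a - c * f3 s a + c * f4 s a) =
  \sum_(s : S) \sum_(a : A) f1 s a - \sum_(s : S) \sum_(a : A) f2 s a
  - c * \sum_(s : S) \sum_(a : A) f3 s a + c * \sum_(s : S) \sum_(a : A) f4 s a.
Proof.
rewrite !mulr_sumr -!sumrB -big_split /=; apply: eq_bigr => s _.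
rewrite !mulr_sumr -!sumrB -big_split /=; apply: eq_bigr => a _.
done.
Qed.

Lemma sum1_lin (f1 f2 : S -> R) c d :
  \sum_(s : S) (c * f1 s + d * f2 s) = c * \sum_(s : S) f1 s + d * \sum_(s : S) f2 s.
Proof. by rewrite big_split /= !mulr_sumr. Qed.

Lemma D0E (vs v : S -> R) (us u : S -> A -> R) (dV : S -> R) (dU : S -> A -> R) :
  tau != 0 -> alpha != 0 -> (forall s a, u s a != 0) ->
  (forall s', dV s' = - (v s' - alpha^-1 * Cv u s')) ->
  (forall s a, dU s a = - (u s a * (ln (u s a / utilde u s)
                   - tau^-1 * (r s a - \sum_(s' : S) K a s s' * v s')))) ->
  alpha / 2 * \sum_(s : S) (2 * (v s - vs s) * dV s)
  + tau * \sum_(s : S) \sum_(a : A) (us s a * - (dU s a / u s a) + dU s a)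
  = (E vs u - E vs us) + (E vs us - E v us)
    - alpha / 2 * \sum_(s : S) (v s - vs s) ^+ 2 - tau * (Ent us - Cross u us).
Proof.
move=> t0 a0 u0 hV hU.
have e1 : \sum_(s : S) (2 * (v s - vs s) * dV s) =
   (-2) * \sum_(s : S) ((v s - vs s) * v s) + (2 / alpha) * \sum_(s : S) ((v s - vs s) * Cv u s).
  rewrite -sum1_lin; apply: eq_bigr => s _; rewrite hV; field; exact: a0.
have e2 : \sum_(s : S) ((v s - vs s) * Cv u s) = Lin u v - Lin u vs.
  by rewrite -LinB -LinE; apply: eq_bigr => s _.
have e3 : \sum_(s : S) ((v s - vs s) * v s) =
   \sum_(s : S) v s ^+ 2 - \sum_(s : S) (vs s * v s).
  by rewrite -sumrB; apply: eq_bigr => s _; ring.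
have e4 : \sum_(s : S) (v s - vs s) ^+ 2 =
   \sum_(s : S) v s ^+ 2 + (-2) * \sum_(s : S) (vs s * v s) + \sum_(s : S) vs s ^+ 2.
  rewrite mulr_sumr -!big_split /=; apply: eq_bigr => s _; ring.
have e5 : \sum_(s : S) \sum_(a : A) (us s a * - (dU s a / u s a) + dU s a) =
  \sum_(s : S) \sum_(a : A) (us s a * ln (u s a / utilde u s))
  - \sum_(s : S) \sum_(a : A) (u s a * ln (u s a / utilde u s))
  - tau^-1 * \sum_(s : S) \sum_(a : A) (us s a * (r s a - \sum_(s' : S) K a s s' * v s'))
  + tau^-1 * \sum_(s : S) \sum_(a : A) (u s a * (r s a - \sum_(s' : S) K a s s' * v s')).
  rewrite -sum2_lin; apply: eq_bigr => s _; apply: eq_bigr => a _.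
  rewrite hU; field; rewrite t0 u0 //.
rewrite e1 e2 e3 e4 e5 !sumQ !EfunE /Ent /Cross.
field; by rewrite t0 a0.
Qed.
End Alg.

Section Alg2.
Variables (R : realType) (S A : finType).
Variables (P : A -> S -> S -> R) (r : S -> A -> R) (gamma tau alpha : R).
Local Notation K := (Kmat P gamma).
Local Notation E := (Efun P r gamma tau alpha).

Lemma utilde_gt0 (u : S -> A -> R) (s : S) (a : A) : posu u -> 0 < utilde u s.
Proof.
move=> pu; rewrite /utilde (bigD1 a) //=.
apply: (lt_le_trans (pu s a)); rewrite lerDl.
by apply: sumr_ge0 => i _; apply: ltW.
Qed.

Lemma ln_le_sub1 (x : R) : 0 < x -> ln x <= x - 1.
Proof.
move=> x0; have := expR_ge1Dx (ln x); rewrite lnK ?posrE //; lra.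
Qed.

Lemma ln_eq_sub1 (x : R) : 0 < x -> x - 1 - ln x = 0 -> x = 1.
Proof.
move=> x0 h; have [l0|ln0] := eqVneq (ln x) 0.
  by rewrite -(lnK (x:=x)) ?posrE // l0 expR0.
have := expR_gt1Dx ln0; rewrite lnK ?posrE //; lra.
Qed.

Lemma gibbs (u us : S -> A -> R) : posu u -> posu us ->
  0 <= Ent us - Cross u us /\
  (Ent us - Cross u us = 0 -> forall s a, u s a / utilde u s = us s a / utilde us s).
Proof.
move=> pu pus.
pose x s a := (u s a / utilde u s) / (us s a / utilde us s).
pose h s a := us s a * (x s a - 1 - ln (x s a)).
have xpos s a : 0 < x s a.
  by rewrite /x; apply: divr_gt0; apply: divr_gt0 => //; apply: (utilde_gt0 s a).
have hpos s a : 0 <= h s a.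
  by apply: mulr_ge0; [apply: ltW | have := ln_le_sub1 (xpos s a); lra].
have eq : Ent us - Cross u us = \sum_(s : S) \sum_(a : A) h s a.
  rewrite /Ent /Cross -sumrB; apply: eq_bigr => s _.
  have zz : \sum_(a : A) (u s a * (utilde us s / utilde u s) - us s a) = 0.
    rewrite sumrB -mulr_suml -/(utilde u s) -/(utilde us s).
    have [z|nz] := eqVneq (utilde u s) 0.
      rewrite z mul0r /utilde big1 ?subrr // => a _.
      by have := utilde_gt0 s a pu; rewrite z ltxx.
    by rewrite mulrC divfK // subrr.
  rewrite -[LHS]addr0 -[X in _ + X = _]zz -sumrB -big_split /=; apply: eq_bigr => a _.
  have ut0 : 0 < utilde u s by apply: (utilde_gt0 s a).
  have uts0 : 0 < utilde us s by apply: (utilde_gt0 s a).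
  rewrite /h /x (@ln_div _ (u s a / utilde u s) (us s a / utilde us s)) ?posrE; try by apply: divr_gt0.
  field; rewrite !lt0r_neq0 //.
split; first by rewrite eq; apply: sumr_ge0 => s _; apply: sumr_ge0.
rewrite eq => hz s a.
have hs := psumr_eq0P (fun s _ => sumr_ge0 _ (fun a _ => hpos s a)) hz.
have ha := psumr_eq0P (fun a _ => hpos s a) (hs s isT).
have := ha a isT; rewrite /h => /eqP; rewrite mulf_eq0 (gt_eqF (pus s a)) /=.
by move=> /eqP /(ln_eq_sub1 (xpos s a)); rewrite /x => /divr1_eq.
Qed.
End Alg2.

Section Alg3.
Variables (R : realType) (S A : finType).
Variables (P : A -> S -> S -> R) (r : S -> A -> R) (gamma tau alpha : R).
Local Notation K := (Kmat P gamma).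
Local Notation E := (Efun P r gamma tau alpha).

Lemma vopt_lemma (vs : S -> R) (us : S -> A -> R) : 0 < alpha ->
  (forall v, E vs us <= E v us) -> forall s', alpha * vs s' = Cv P gamma us s'.
Proof.
move=> a0 opt.
pose w s := alpha^-1 * Cv P gamma us s.
have H := opt w.
have eE : E w us - E vs us = - (alpha / 2) * \sum_(s : S) (w s - vs s) ^+ 2.
  have -> : E w us - E vs us = alpha / 2 * (\sum_(s : S) w s ^+ 2 - \sum_(s : S) vs s ^+ 2)
     - (Lin P gamma us w - Lin P gamma us vs) by rewrite !EfunE; ring.
  rewrite -LinB -LinE -sumrB mulr_sumr -sumrB mulr_sumr; apply: eq_bigr => s _.
  have -> : Cv P gamma us s = alpha * w s by rewrite /w; field; rewrite gt_eqF.
  by move: (w s) => ws; field.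
have le : \sum_(s : S) (w s - vs s) ^+ 2 <= 0.
  have : 0 <= E w us - E vs us by rewrite subr_ge0.
  rewrite eE mulNr oppr_ge0 pmulr_rle0 //; exact: divr_gt0.
move=> s'.
have z : (w s' - vs s') ^+ 2 = 0 := psumr_eq0P (fun s _ => sqr_ge0 (w s - vs s))
   (le_anti (introT andP (conj le (sumr_ge0 _ (fun s _ => sqr_ge0 (w s - vs s)))))) isT.
move/eqP: z; rewrite sqrf_eq0 subr_eq0 => /eqP <-.
by rewrite /w mulrA divff ?mul1r // gt_eqF.
Qed.

Lemma inj_c (us : S -> A -> R) (c : S -> R) : posu us ->
  (forall a s s', 0 <= P a s s') -> (forall a s, \sum_(s' : S) P a s s' = 1) ->
  0 <= gamma -> gamma < 1 ->
  (forall s', \sum_(s : S) \sum_(a : A) K a s s' * (c s * us s a) = 0) ->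
  forall s a, c s * us s a = 0.
Proof.
move=> pus P0 P1 g0 g1 H.
pose w s := c s * utilde us s.
pose X s' := \sum_(s : S) \sum_(a : A) P a s s' * (c s * us s a).
have wX s' : w s' = gamma * X s'.
  have := H s'.
  have -> : \sum_(s : S) \sum_(a : A) K a s s' * (c s * us s a)
     = \sum_(s : S) (s == s')%:R * w s - gamma * X s'.
    rewrite /X mulr_sumr -sumrB; apply: eq_bigr => s _.
    rewrite mulr_sumr /w /utilde mulr_sumr mulr_sumr -sumrB; apply: eq_bigr => a _.
    rewrite /Kmat; ring.
  rewrite (bigD1 s') //= eqxx mul1r big1 ?addr0; first by move/eqP; rewrite subr_eq0 => /eqP.
  by move=> i /negbTE ->; rewrite mul0r.
have hX s' : `|w s'| <= gamma * \sum_(s : S) \sum_(a : A) P a s s' * (`|c s| * us s a).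
  rewrite wX normrM ger0_norm //; apply: ler_wpM2l => //.
  apply: (le_trans (ler_norm_sum _ _ _)); apply: ler_sum => s _.
  apply: (le_trans (ler_norm_sum _ _ _)); apply: ler_sum => a _.
  rewrite !normrM (ger0_norm (P0 a s s')) (gtr0_norm (pus s a)) //.
have sw : \sum_(s' : S) `|w s'| <= gamma * \sum_(s : S) `|w s|.
  apply: (le_trans (ler_sum _ (fun s' _ => hX s'))).
  rewrite -mulr_sumr; apply: ler_wpM2l => //.
  rewrite exchange_big /= le_eqVlt; apply/orP; left; apply/eqP; apply: eq_bigr => s _.
  rewrite exchange_big /= /w normrM (@ger0_norm _ (utilde us s)); last first.
    by apply: sumr_ge0 => a _; apply: ltW.
  rewrite /utilde mulr_sumr; apply: eq_bigr => a _.
  by rewrite -mulr_suml P1 mul1r.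
have sw0 : \sum_(s : S) `|w s| = 0.
  apply: le_anti; apply/andP; split; last by apply: sumr_ge0 => s _; apply: normr_ge0.
  have : (1 - gamma) * \sum_(s : S) `|w s| <= 0 by lra.
  by rewrite pmulr_rle0 // subr_gt0.
move=> s a.
have : `|w s| = 0 := psumr_eq0P (fun s _ => normr_ge0 (w s)) sw0 isT.
move/eqP; rewrite normr_eq0 /w mulf_eq0 => /orP [/eqP -> | ]; first by rewrite mul0r.
by rewrite gt_eqF // (utilde_gt0 s a).
Qed.
End Alg3.

Section Deriv.
Variables (R : realType) (S A : finType).
Variables (P : A -> S -> S -> R) (r : S -> A -> R) (gamma tau alpha : R).

Lemma isd_of (f : R -> R) t : derivable f t 1 -> is_derive t 1 f (derive1 f t).
Proof. by move=> h; rewrite derive1E; apply: derivableP. Qed.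

Lemma dLyap (vs : S -> R) (us : S -> A -> R) (V : R -> S -> R) (U : R -> S -> A -> R) t :
  posu us -> ngad_at P r gamma tau alpha V U t ->
  derive1 (fun x => Lyap tau alpha vs us (V x) (U x)) t =
  alpha / 2 * \sum_(s : S) (2 * (V t s - vs s) * derive1 (fun x => V x s) t)
  + tau * \sum_(s : S) \sum_(a : A) (us s a * - (derive1 (fun x => U x s a) t / U t s a)
                                     + derive1 (fun x => U x s a) t).
Proof.
move=> pus [pu [dV [dU _]]].
rewrite derive1E; apply: derive_val.
apply: isd_add; apply: isd_scale; apply: isd_sumI => s.
  by apply: isd_sq; apply: isd_sub_cst; apply: isd_of.
apply: isd_sumI => a; apply: isd_sub_cst; apply: isd_add; last exact: isd_of.
by apply: isd_scale; apply: isd_lnquot => //; apply: isd_of.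
Qed.
End Deriv.

Unset Implicit Arguments.

Theorem lemma2p3 (R : realType) (S A : finType)
  (P : A -> S -> S -> R) (r : S -> A -> R) (gamma tau alpha : R)
  (vs : S -> R) (us : S -> A -> R) :
  (forall a s s', 0 <= P a s s') ->
  (forall a s, \sum_(s' : S) P a s s' = 1) ->
  (forall s a, 0 <= r s a) ->
  0 < gamma -> gamma < 1 -> 0 < tau -> 0 < alpha ->
  is_saddle P r gamma tau alpha vs us ->
  (* dL/dt <= 0 along trajectories *)
  (forall (V : R -> S -> R) (U : R -> S -> A -> R) (t : R),
     ngad_at P r gamma tau alpha V U t ->
     derive1 (fun x => Lyap tau alpha vs us (V x) (U x)) t <= 0) /\
  (* the only trajectory with dL/dt = 0 is the constant (vs, us) *)
  (forall (V : R -> S -> R) (U : R -> S -> A -> R) (a b : R),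
     a < b ->
     (forall t, t \in `]a, b[ -> ngad_at P r gamma tau alpha V U t) ->
     (forall t, t \in `]a, b[ ->
        derive1 (fun x => Lyap tau alpha vs us (V x) (U x)) t = 0) ->
     forall t, t \in `]a, b[ -> V t = vs /\ U t = us).
Proof.
move=> P0 P1 r0 g0 g1 t0 a0 [pus [uopt vopt]].
have key : forall V U t, ngad_at P r gamma tau alpha V U t ->
  exists X1 X2 Q G,
  [/\ derive1 (fun x => Lyap tau alpha vs us (V x) (U x)) t
       = X1 + X2 - alpha / 2 * Q - tau * G,
      X1 <= 0, X2 <= 0, Q = \sum_(s : S) (V t s - vs s) ^+ 2 &
      G = Ent us - Cross (U t) us].
  move=> V U t hn.
  rewrite (dLyap vs pus hn).
  case: hn => pu [_ [_ [hV hU]]].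
  rewrite (@D0E R S A P r gamma tau alpha vs (V t) us (U t) _ _ (lt0r_neq0 t0) (lt0r_neq0 a0) (fun s a => lt0r_neq0 (pu s a)) hV hU).
  do 4 eexists; split; [reflexivity | | | reflexivity | reflexivity].
    by rewrite subr_le0; apply: uopt.
  by rewrite subr_le0; apply: vopt.
have Qge0 (w : S -> R) : 0 <= \sum_(s : S) (w s - vs s) ^+ 2.
  by apply: sumr_ge0 => s _; apply: sqr_ge0.
split.
  move=> V U t hn.
  have [X1 [X2 [Q [G [-> h1 h2 hQ hG]]]]] := key V U t hn.
  have hq : 0 <= Q by rewrite hQ.
  have hg : 0 <= G by rewrite hG; case: (gibbs (proj1 hn) pus).
  have : 0 <= alpha / 2 * Q by apply: mulr_ge0 => //; apply: divr_ge0; lra.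
  have : 0 <= tau * G by apply: mulr_ge0 => //; lra.
  lra.
move=> V U a b ab hn hz.
have step t : t \in `]a, b[ -> V t = vs /\ Ent us - Cross (U t) us = 0.
  move=> tin.
  have [X1 [X2 [Q [G [e h1 h2 hQ hG]]]]] := key V U t (hn t tin).
  have hq : 0 <= Q by rewrite hQ.
  have hg : 0 <= G by rewrite hG; case: (gibbs (proj1 (hn t tin)) pus).
  have e0 := hz t tin; rewrite e0 in e.
  have aq : 0 <= alpha / 2 * Q by apply: mulr_ge0 => //; apply: divr_ge0; lra.
  have tg : 0 <= tau * G by apply: mulr_ge0 => //; lra.
  have aq0 : alpha / 2 * Q = 0 by lra.
  have tg0 : tau * G = 0 by lra.
  move/eqP: aq0; rewrite mulf_eq0 => /orP [|/eqP Q0].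
    by rewrite gt_eqF // divr_gt0 //; lra.
  move/eqP: tg0; rewrite mulf_eq0 (gt_eqF t0) /= => /eqP G0.
  split; last by rewrite -hG.
  apply: funext => s.
  rewrite hQ in Q0.
  have : (V t s - vs s) ^+ 2 = 0 := psumr_eq0P (fun s _ => sqr_ge0 (V t s - vs s)) Q0 isT.
  by move/eqP; rewrite sqrf_eq0 subr_eq0 => /eqP.
move=> t tin.
have [Vt Gt] := step t tin.
split => //.
have pu := proj1 (hn t tin).
have pp := (proj2 (gibbs pu pus)) Gt.
have dV0 s' : derive1 (fun x => V x s') t = 0.
  rewrite derive1E (@near_eq_derive _ _ _ _ (fun _ => vs s')) ?derive_cst //.
  by apply: filterS (near_in_itvoo tin) => x /step [-> _].
have Cveq s' : Cv P gamma (U t) s' = Cv P gamma us s'.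
  rewrite -(vopt_lemma a0 vopt s').
  case: (hn t tin) => _ [_ [_ [hV _]]].
  have := hV s'; rewrite dV0 Vt => /eqP; rewrite eq_sym oppr_eq0 subr_eq0 => /eqP ->.
  by rewrite mulrA divff ?mul1r // gt_eqF.
pose c s := utilde (U t) s / utilde us s - 1.
have cu s aa : U t s aa - us s aa = c s * us s aa.
  have := pp s aa; rewrite /c => h.
  have h0 := utilde_gt0 s aa pus.
  have h1 := utilde_gt0 s aa pu.
  have -> : U t s aa = U t s aa / utilde (U t) s * utilde (U t) s by rewrite divfK // gt_eqF.
  rewrite h; field; exact: lt0r_neq0.
have z := @inj_c R S A P gamma us c pus P0 P1 (ltW g0) g1.
apply: funext => s; apply: funext => a1.
apply/eqP; rewrite -subr_eq0 cu; apply/eqP; apply: z.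
move=> s'.
rewrite -[RHS](subrr (Cv P gamma us s')) -{1}(Cveq s') /Cv -sumrB.
apply: eq_bigr => s0 _; rewrite -sumrB; apply: eq_bigr => a0' _.
by rewrite -cu mulrBr.
Qed.
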